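(* Let $D$ be a finite division semialgebra over $\mathbb{Z}_\mathrm{max}$. Then $D\cong F^{(n)}$ for some positive integer $n$ (in particular $D$ is commutative).
   Context: A (possibly noncommutative) semiring is a set with two associative binary operations, addition (commutative, with identity $0$) and multiplication (with identity $1$), satisfying both distributive laws. A division semiring is a semiring in which every nonzero element has a two-sided multiplicative inverse; a semifield is a commutative division semiring. $\mathbb{Z}_\mathrm{max}=\mathbb{Z}\cup\{-\infty\}$ is the semifield with addition $\max$ and multiplication ordinary addition; writing $u$ for the integer $1$ in it, $\mathbb{Z}_\mathrm{max}=\{0\}\cup\{u^k:k\in\mathbb{Z}\}$ with $u^a+u^b=u^{\max(a,b)}$. A division semialgebra over a semifield $K$ is a division semiring $D$ together with an injective homomorphism from $K$ into the center of $D$; it is finite if $D$ is finitely generated as a left $K$-semimodule. For a positive integer $n$, $F^{(n)}$ is the semifield $\mathbb{Z}_\mathrm{max}$ regarded as an extension of $\mathbb{Z}_\mathrm{max}$ via $u^k\mapsto u^{nk}$, $0\mapsto 0$; the isomorphism is one of semialgebras over $\mathbb{Z}_\mathrm{max}$. *)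

(* Defs.v *)
From HB Require Import structures.
From mathcomp Require Import all_boot all_order all_algebra.
Set Implicit Arguments. Unset Strict Implicit. Unset Printing Implicit Defensive.
Import Order.TTheory GRing.Theory Num.Theory.
Local Open Scope ring_scope.

(* The semifield Z_max = Z ∪ {-oo}: [None] is the zero (-oo),
   [Some k] is u^k; addition is max, multiplication is addition of exponents. *)
Definition zmax := option int.
Definition zmax0 : zmax := None.
Definition zmax1 : zmax := Some 0.
Definition zmax_add (a b : zmax) : zmax :=
  match a, b with
  | None, x => x
  | x, None => x
  | Some i, Some j => Some (Num.max i j)
  end.
Definition zmax_mul (a b : zmax) : zmax :=
  match a, b with
  | Some i, Some j => Some (i + j)
  | _, _ => None
  end.

(* The embedding Z_max -> F^(n) = Z_max, u^k |-> u^(nk), 0 |-> 0. *)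
Definition zmax_pow_embed (n : nat) (a : zmax) : zmax :=
  match a with
  | None => None
  | Some k => Some (k * n%:Z)
  end.

Definition zmax_semiring_hom (D : pzSemiRingType) (phi : zmax -> D) : Prop :=
  [/\ phi zmax0 = 0, phi zmax1 = 1,
      forall a b, phi (zmax_add a b) = phi a + phi b
    & forall a b, phi (zmax_mul a b) = phi a * phi b].

Definition semiring_hom_to_zmax (D : pzSemiRingType) (psi : D -> zmax) : Prop :=
  [/\ psi 0 = zmax0, psi 1 = zmax1,
      forall x y, psi (x + y) = zmax_add (psi x) (psi y)
    & forall x y, psi (x * y) = zmax_mul (psi x) (psi y)].

Definition division_semiring (D : pzSemiRingType) : Prop :=
  forall x : D, x <> 0 -> exists y : D, x * y = 1 /\ y * x = 1.

Definition division_semialgebra_zmax (D : pzSemiRingType) (phi : zmax -> D) : Prop :=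
  [/\ division_semiring D, zmax_semiring_hom phi, injective phi
    & forall (k : zmax) (d : D), phi k * d = d * phi k].

Definition finite_semialgebra (D : pzSemiRingType) (phi : zmax -> D) : Prop :=
  exists s : seq D, forall d : D, exists ks : seq zmax,
    size ks = size s /\ d = \sum_(i < size s) phi (nth zmax0 ks i) * s`_i.

(* Main.v *)
Require Import Defs.
From mathcomp Require Import all_boot all_order all_algebra.
From mathcomp Require Import zify.
From Stdlib Require Import Classical ClassicalEpsilon.
Set Implicit Arguments. Unset Strict Implicit. Unset Printing Implicit Defensive.
Import Order.TTheory GRing.Theory Num.Theory.
Local Open Scope ring_scope.

Section Main.
Variable D : pzSemiRingType.
Variable phi : zmax -> D.
Hypothesis Hdiv : division_semialgebra_zmax phi.
Hypothesis Hfin : finite_semialgebra phi.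

Local Notation t k := (phi (Some k)).
Definition le (a b : D) := a + b = b.

Lemma phi0 : phi None = 0. Proof. by case: Hdiv => _ [] . Qed.
Lemma t0 : t 0 = 1. Proof. by case: Hdiv => _ [] . Qed.
Lemma phiA a b : phi (zmax_add a b) = phi a + phi b. Proof. by case: Hdiv => _ [] . Qed.
Lemma phiM a b : phi (zmax_mul a b) = phi a * phi b. Proof. by case: Hdiv => _ [] . Qed.
Lemma tD a b : t a + t b = t (Num.max a b). Proof. by rewrite -phiA. Qed.
Lemma tM a b : t a * t b = t (a + b). Proof. by rewrite -phiM. Qed.
Lemma tcomm k d : phi k * d = d * phi k. Proof. by case: Hdiv. Qed.
Lemma phi_inj : injective phi. Proof. by case: Hdiv. Qed.
Lemma Hinv (x : D) : x <> 0 -> exists y, x * y = 1 /\ y * x = 1.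
Proof. by case: Hdiv => h _ _ _; apply: h. Qed.
Lemma one_neq0 : (1 : D) <> 0.
Proof. by rewrite -t0 -phi0 => /phi_inj. Qed.
Lemma idem (x : D) : x + x = x.
Proof. by rewrite -{1 2}(mulr1 x) -mulrDr -t0 tD maxxx t0 mulr1. Qed.
Lemma le_refl x : le x x. Proof. exact: idem. Qed.
Lemma le_trans' a b c : le a b -> le b c -> le a c.
Proof. rewrite /le => h1 h2; by rewrite -{1}h2 addrA h1. Qed.
Lemma le_anti a b : le a b -> le b a -> a = b.
Proof. by rewrite /le => h1 h2; rewrite -h1 -{1}h2 addrC. Qed.
Lemma leD a b c d : le a b -> le c d -> le (a + c) (b + d).
Proof. rewrite /le => h1 h2; by rewrite addrACA h1 h2. Qed.
Lemma le_addl a b : le a (a + b). Proof. by rewrite /le addrA idem. Qed.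
Lemma le_addr a b : le b (a + b). Proof. by rewrite addrC; apply: le_addl. Qed.
Lemma le_lub a b c : le a c -> le b c -> le (a + b) c.
Proof. by move=> h1 h2; rewrite -(idem c); apply: leD. Qed.
Lemma leMl c a b : le a b -> le (c * a) (c * b).
Proof. by rewrite /le => h; rewrite -mulrDr h. Qed.
Lemma leMr c a b : le a b -> le (a * c) (b * c).
Proof. by rewrite /le => h; rewrite -mulrDl h. Qed.
Lemma le_t (a b : int) : (a <= b)%R -> le (t a) (t b).
Proof. by move=> h; rewrite /le tD (max_idPr h). Qed.
Lemma le0 a : le 0 a. Proof. by rewrite /le add0r. Qed.
Lemma le_0 a : le a 0 -> a = 0. Proof. by rewrite /le addr0. Qed.
Lemma t_inv (k : int) : t k * t (- k) = 1 /\ t (- k) * t k = 1.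
Proof. by rewrite !tM subrr addNr t0. Qed.
Lemma t_neq0 (k : int) : t k <> 0.
Proof. move=> h; apply: one_neq0; by rewrite -(t_inv k).1 h mul0r. Qed.
Lemma mul_neq0 (x y : D) : x <> 0 -> y <> 0 -> x * y <> 0.
Proof.
move=> hx hy h; have [x' [_ hx']] := Hinv hx.
apply: hy; by rewrite -(mul1r y) -hx' -mulrA h mulr0.
Qed.
Lemma cancl (x y z : D) : x <> 0 -> x * y = x * z -> y = z.
Proof.
move=> hx h; have [x' [_ hx']] := Hinv hx.
by rewrite -(mul1r y) -(mul1r z) -hx' -!mulrA h.
Qed.
Lemma cancr (x y z : D) : x <> 0 -> y * x = z * x -> y = z.
Proof.
move=> hx h; have [x' [hx' _]] := Hinv hx.
by rewrite -(mulr1 y) -(mulr1 z) -hx' !mulrA h.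
Qed.
Lemma sum0 (a b : D) : a + b = 0 -> a = 0.
Proof. move=> h; apply: le_0; rewrite -h; exact: le_addl. Qed.


Fixpoint inspan (s : seq D) (d : D) : Prop :=
  match s with
  | [::] => d = 0
  | x :: s' => exists k d', inspan s' d' /\ d = phi k * x + d'
  end.

Lemma gen : exists s, forall d, inspan s d.
Proof.
case: Hfin => s hs; exists s => d; case: (hs d) => ks [hsz ->].
elim: s ks {hs d} hsz => [|x s IH] [|k ks] //= hsz.
  by rewrite big_ord0.
rewrite big_ord_recl /=.
exists k, (\sum_(i < size s) phi (nth zmax0 ks i) * s`_i); split => //.
by apply: IH; case: hsz.
Qed.

Lemma inspan0 s : inspan s 0.
Proof.
elim: s => [|x s IH] //=; exists None, 0; split => //.
by rewrite phi0 mul0r addr0.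
Qed.

Lemma inspan_add s a b : inspan s a -> inspan s b -> inspan s (a + b).
Proof.
elim: s a b => [|x s IH] a b /=; first by move=> -> ->; rewrite addr0.
move=> [ka [a' [ha ->]]] [kb [b' [hb ->]]].
exists (zmax_add ka kb), (a' + b'); split; first exact: IH.
by rewrite phiA mulrDl addrACA.
Qed.

Lemma inspan_scale s k a : inspan s a -> inspan s (phi k * a).
Proof.
elim: s a => [|x s IH] a /=; first by move=> ->; rewrite mulr0.
move=> [ka [a' [ha ->]]].
exists (zmax_mul k ka), (phi k * a'); split; first exact: IH.
by rewrite phiM mulrDr mulrA.
Qed.

Definition kval (k : zmax) : int := if k is Some j then j else 0.

Lemma le_phi k A : (kval k <= A)%R -> le (phi k) (t A).
Proof. case: k => [j|] /= h; [exact: le_t | rewrite phi0; exact: le0]. Qed.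

Lemma inspan_bound s g : inspan s g -> exists A, le g (t A * \sum_(x <- s) x).
Proof.
elim: s g => [|x s IH] g /=.
  by move=> ->; exists 0; rewrite big_nil mulr0; apply: le_refl.
move=> [k [d' [hd ->]]]; have [A' hA'] := IH _ hd.
exists (Num.max A' (kval k)); rewrite big_cons mulrDr; apply: leD.
  by apply: leMr; apply: le_phi; rewrite le_max lexx orbT.
apply: (le_trans' hA'); apply: leMr; apply: le_t; by rewrite le_max lexx.
Qed.

Lemma ub g : exists A, le g (t A).
Proof.
have [s hs] := gen.
set c := \sum_(x <- s) x.
have cnz : c <> 0.
  move=> c0; apply: one_neq0; have [A hA] := inspan_bound (hs 1).
  by apply: le_0; move: hA; rewrite -/c c0 mulr0.
have [A hA] := inspan_bound (hs (c * c)); rewrite -/c in hA.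
have hc : le c (t A).
  have [c' [hc' _]] := Hinv cnz.
  have := leMr c' hA; by rewrite -!mulrA hc' !mulr1.
have [B hB] := inspan_bound (hs g); rewrite -/c in hB.
exists (B + A); apply: (le_trans' hB); rewrite -tM; exact: leMl.
Qed.

Lemma lb g : g <> 0 -> exists K, le (t K) g.
Proof.
move=> gnz; have [g' [hg1 hg2]] := Hinv gnz.
have [A hA] := ub g'; exists (- A).
have := leMl (t (- A)) (leMr g hA).
by rewrite hg2 mulr1 !mulrA (t_inv A).2 mul1r.
Qed.


Definition negk (k : zmax) : bool := if k is Some j then (j < 0)%R else true.

Lemma eps k (s0 r : D) : negk k -> s0 <> 0 -> s0 = phi k * s0 + r -> s0 = r.
Proof.
case: k => [j|] /= hj s0nz; last by rewrite phi0 mul0r add0r.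
move=> e; have [s' [h1 h2]] := Hinv s0nz.
set x := r * s'.
have e1 : 1 = t j + x.
  have : s0 * s' = (t j * s0 + r) * s' by rewrite -e.
  by rewrite mulrDl -mulrA h1 mulr1.
have xle : le x 1 by rewrite /le {1}e1 addrCA idem -e1.
have tle (m : int) : (m <= 0)%R -> le (t m) 1 by move=> hm; rewrite -t0; apply: le_t.
have key (n : nat) : t (j * n.+1%:Z) + x = 1.
  elim: n => [|n IH]; first by rewrite mulr1 -e1.
  have E : (1 : D) = (t (j * n.+1%:Z) + x) * (t j + x) by rewrite IH -e1 mulr1.
  rewrite mulrDl !mulrDr tM in E.
  have hB : le (t (j * n.+1%:Z) * x) x.
    rewrite -{2}(mul1r x); apply: leMr; apply: tle.
    by apply: mulr_le0_ge0 => //; exact: ltW.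
  have hC : le (x * t j) x.
    rewrite -{2}(mulr1 x); apply: leMl; apply: tle; exact: ltW.
  have hE : le (x * x) x by rewrite -{3}(mulr1 x); apply: leMl.
  have hBCE := le_lub (le_lub hB hC) hE.
  have -> : j * n.+2%:Z = j * n.+1%:Z + j.
    by rewrite -[n.+2]addn1 PoszD mulrDr mulr1.
  transitivity ((t (j * n.+1%:Z + j) + t (j * n.+1%:Z) * x + (x * t j + x * x)) + x).
    by rewrite -{1}hBCE !addrA.
  by rewrite -E addrC; exact: xle.
have xnz : x <> 0.
  move=> x0; move: e1; rewrite x0 addr0 -t0 => /phi_inj [] hj0.
  by rewrite hj0 ltxx in hj.
have [K hK] := lb xnz.
have hx1 : x = 1.
  rewrite -(key `|K|%N).
  have : le (t (j * `|K|.+1%:Z)) x.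
    apply: (le_trans' _ hK); apply: le_t.
    have hj1 : (j <= -1)%R by rewrite -ltzD1 addrC subrr.
    have hK1 : (- (`|K|.+1%:Z) <= K)%R.
      lia.
    apply: (le_trans _ hK1).
    nia.
  by rewrite /le addrC.
by rewrite -(mul1r s0) -hx1 /x -mulrA h2 mulr1.
Qed.


Lemma negk_add a b : negk a -> negk b -> negk (zmax_add a b).
Proof. by case: a => [i|] //; case: b => [j|] //= hi hj; rewrite gt_max hi hj. Qed.

Lemma negk_of (a b x0 a' : D) k :
  a + b = x0 -> a <> x0 -> a = phi k * x0 + a' -> negk k.
Proof.
case: k => [j|] //= hab ha e; rewrite ltNge; apply/negP => hj; apply: ha.
apply: le_anti; first by rewrite -hab; apply: le_addl.
rewrite e; apply: (@le_trans' _ (t j * x0)); last exact: le_addl.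
by rewrite -{1}(mul1r x0) -t0; apply: leMr; apply: le_t.
Qed.

Lemma noirr : (forall g : D, g <> 0 -> exists x y : D, x + y = g /\ x <> g /\ y <> g) ->
  forall s, (forall d, inspan s d) -> False.
Proof.
move=> H; elim => [|x0 s IH] hs; first by apply: one_neq0; exact: (hs 1).
apply: IH; case: (classic (x0 = 0)) => [x00|x0nz].
  by move=> d; have [k [d' [hd ->]]] := hs d; rewrite x00 mulr0 add0r.
have [a [b [hab [ha hb]]]] := H _ x0nz.
have [ka [a' [ha' ea]]] := hs a; have [kb [b' [hb' eb]]] := hs b.
have nka := negk_of hab ha ea.
have hba : b + a = x0 by rewrite addrC.
have nkb := negk_of hba hb eb.
have e0 : x0 = phi (zmax_add ka kb) * x0 + (a' + b')
  by rewrite phiA mulrDl addrACA -ea -eb hab.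
move=> d; have [k [d' [hd ->]]] := hs d.
rewrite (eps (negk_add nka nkb) x0nz e0).
by apply: inspan_add => //; apply: inspan_scale; apply: inspan_add.
Qed.

Lemma irr_ex : exists g : D, g <> 0 /\ forall x y : D, x + y = g -> x = g \/ y = g.
Proof.
have [s hs] := gen; apply: NNPP => H; apply: (noirr _ hs) => g gnz.
apply: NNPP => H2; apply: H; exists g; split => // x y e.
apply: NNPP => H3; apply: H2; exists x, y; split => //; split => h; apply: H3; by [left|right].
Qed.

Lemma total (a b : D) : a + b = a \/ a + b = b.
Proof.
have [g0 [g0nz hirr]] := irr_ex.
case: (classic (a + b = 0)) => [h0|hnz].
  by right; rewrite (sum0 h0) add0r.
have [h' [hh1 hh2]] := Hinv hnz.
have h'nz : h' <> 0 by move=> h0; apply: one_neq0; rewrite -hh1 h0 mulr0.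
have unz : g0 * h' <> 0 by apply: mul_neq0.
have eu : (g0 * h') * (a + b) = g0 by rewrite -mulrA hh2 mulr1.
have eu' := eu; rewrite mulrDr in eu'.
case: (hirr _ _ eu') => e.
  by left; apply: (cancl unz); rewrite e eu.
by right; apply: (cancl unz); rewrite e eu.
Qed.


Definition lt (a b : D) := le a b /\ a <> b.
Definition In1t (g : D) := lt 1 g /\ le g (t 1).

Lemma coset s g : inspan s g -> g <> 0 ->
  exists i k, (i < size s)%N /\ g = t k * nth 0 s i.
Proof.
elim: s g => [|x s IH] g /=; first by move=> ->.
move=> [c [d' [hd ->]]] gnz.
case: (total (phi c * x) d') => e; rewrite e in gnz *.
  case: c e gnz => [k|] e gnz; last by rewrite phi0 mul0r in gnz.
  by exists 0%N, k.
have [i [k [hi ->]]] := IH _ hd gnz; by exists i.+1, k.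
Qed.

Lemma le1t : le 1 (t 1). Proof. by rewrite -t0; apply: le_t. Qed.
Lemma t1_neq1 : (1 : D) <> t 1.
Proof. by rewrite -t0 => /phi_inj []. Qed.
Lemma In1t_t1 : In1t (t 1).
Proof. split; [split; [exact: le1t | exact: t1_neq1] | exact: le_refl]. Qed.

Lemma uniq_coset g y a b z : In1t g -> In1t y -> g = t a * z -> y = t b * z -> g = y.
Proof.
wlog hab : g y a b / (a <= b)%R.
  move=> W hg hy eg ey; case: (lerP a b) => h; first exact: (W _ _ a b).
  by symmetry; apply: (W _ _ b a) => //; apply: ltW.
move=> [[hg1 hg1'] hgt] [[hy1 hy1'] hyt] eg ey.
case: (eqVneq a b) => [eab|hne]; first by rewrite eg ey eab.
have hlt : (a < b)%R by rewrite lt_neqAle hne hab.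
have ez : z = t (- a) * g by rewrite eg mulrA (t_inv a).2 mul1r.
have ey' : y = t (b - a) * g by rewrite ey ez mulrA tM.
have h1 : le (t 1 * g) y.
  rewrite ey'; apply: leMr; apply: le_t; lia.
have h2 : le (t 1) (t 1 * g) by rewrite -{1}(mulr1 (t 1)); apply: leMl.
have yt : y = t 1 by apply: le_anti => //; exact: le_trans' h2 h1.
exfalso; apply: hg1'.
apply: (cancl (@t_neq0 1)); rewrite mulr1; apply: le_anti => //.
by rewrite -{2}yt.
Qed.


Lemma minl (l : seq D) : exists p, In1t p /\ forall g, In1t g ->
  (exists i k, (i < size l)%N /\ g = t k * nth 0 l i) -> le p g.
Proof.
elim: l => [|x l [p' [hp' IH]]].
  by exists (t 1); split; [exact: In1t_t1 | move=> g _ [i [k []]]].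
case: (classic (exists y, In1t y /\ exists k, y = t k * x)) => [[y [hy [ky ey]]]|hno].
  have [p [hp [hpp' hpy]]] : exists p, In1t p /\ le p p' /\ le p y.
    case: (total p' y) => e.
      exists y; split => //; split; [by rewrite /le addrC | exact: le_refl].
    by exists p'; split => //; split; [exact: le_refl | done].
  exists p; split => // g hg [[|i] [k [hi eg]]].
    by rewrite (uniq_coset hg hy eg ey).
  by apply: (le_trans' hpp'); apply: IH => //; exists i, k.
exists p'; split => // g hg [[|i] [k [hi eg]]].
  by exfalso; apply: hno; exists g; split => //; exists k.
by apply: IH => //; exists i, k.
Qed.

Lemma pi_ex : exists p, In1t p /\ forall g, lt 1 g -> le p g.
Proof.
have [s hs] := gen; have [p [hp H]] := minl s.
exists p; split => // g hg.
case: (total g (t 1)) => e.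
  apply: (le_trans' hp.2); by rewrite /le addrC.
apply: H; first by split.
apply: coset => //.
move=> g0; case: hg => h1 h2; apply: one_neq0; apply: le_0; by rewrite -g0.
Qed.


Lemma tX (e : int) (N : nat) : t (e * N%:Z) = t e ^+ N.
Proof.
elim: N => [|N IH]; first by rewrite mulr0 t0 expr0.
by rewrite exprSr -IH tM -[N.+1]addn1 PoszD mulrDr mulr1.
Qed.

Section Pi.
Variables p pi : D.
Hypothesis hp : In1t p.
Hypothesis hpmin : forall g, lt 1 g -> le p g.
Hypothesis hpi1 : p * pi = 1.
Hypothesis hpi2 : pi * p = 1.

Lemma pow_inv n : p ^+ n * pi ^+ n = 1 /\ pi ^+ n * p ^+ n = 1.
Proof.
elim: n => [|n [IH1 IH2]]; first by rewrite !expr0 mulr1.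
split.
  by rewrite exprSr exprS mulrA -(mulrA _ p) hpi1 mulr1 IH1.
by rewrite exprSr exprS mulrA -(mulrA _ pi) hpi2 mulr1 IH2.
Qed.

Lemma comm_p_pi : GRing.comm p pi. Proof. by rewrite /GRing.comm hpi1 hpi2. Qed.
Lemma comm_pow a b : p ^+ a * pi ^+ b = pi ^+ b * p ^+ a.
Proof.
have h : GRing.comm (p ^+ a) pi by apply/commr_sym/commrX/commr_sym/comm_p_pi.
by have := commrX b h.
Qed.

Lemma le1pn n : le 1 (p ^+ n).
Proof.
elim: n => [|n IH]; first by rewrite expr0; exact: le_refl.
rewrite exprSr; apply: (le_trans' hp.1.1).
by rewrite -{1}(mul1r p); apply: leMr.
Qed.

Lemma lt1pn n : lt 1 (p ^+ n.+1).
Proof.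
split; first exact: le1pn.
rewrite exprSr => e; apply: hp.1.2; apply: le_anti; first exact: hp.1.1.
by rewrite e -{1}(mul1r p); apply: leMr; apply: le1pn.
Qed.

Lemma pown_neq0 n : p ^+ n <> 0.
Proof.
move=> h; apply: one_neq0; by rewrite -(pow_inv n).1 h mul0r.
Qed.

Lemma pig_aux (j1 j2 : nat) k1 k2 z : (j1 < j2)%N ->
  p ^+ j1 = t k1 * z -> p ^+ j2 = t k2 * z -> exists d e, (0 < d)%N /\ p ^+ d = t e.
Proof.
move=> hj e1 e2; exists (j2 - j1)%N, (k2 - k1); split; first by rewrite subn_gt0.
apply: (cancr (@pown_neq0 j1)).
rewrite -exprD subnK; last exact: ltnW.
by rewrite e2 e1 mulrA tM addrNK.
Qed.

Lemma pigeon : exists d e, (0 < d)%N /\ p ^+ d = t e.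
Proof.
have [s hs] := gen; set m := size s.
have H (j : 'I_m.+1) : exists i : 'I_m, exists k, p ^+ j = t k * nth 0 s i.
  have [i [k [hi e]]] := coset (hs (p ^+ j)) (@pown_neq0 j).
  by exists (Ordinal hi), k.
pose f j := proj1_sig (constructive_indefinite_description _ (H j)).
have hf (j : 'I_m.+1) : exists k, p ^+ j = t k * nth 0 s (f j).
  exact: (proj2_sig (constructive_indefinite_description _ (H j))).
apply: NNPP => Hn.
have finj : injective f.
  move=> j1 j2 e; apply: NNPP => hne; apply: Hn.
  have [k1 e1] := hf j1; have [k2 e2] := hf j2; rewrite e in e1.
  case: (ltngtP j1 j2) => h.
  - exact: (pig_aux h e1 e2).
  - exact: (pig_aux h e2 e1).
  - by exfalso; apply: hne; apply: val_inj.
have := leq_card f finj; by rewrite !card_ord ltnn.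
Qed.


Lemma epos d e : (0 < d)%N -> p ^+ d = t e -> (0 < e)%R.
Proof.
move=> hd he; rewrite ltNge; apply/negP => hle.
have l1 := lt1pn d.-1; rewrite prednK // in l1.
apply: l1.2; apply: le_anti; first exact: l1.1.
by rewrite he -t0; apply: le_t.
Qed.

Lemma arch g : g <> 0 -> exists K : nat, le (pi ^+ K) g /\ le g (p ^+ K).
Proof.
move=> gnz; have [d [e [hd he]]] := pigeon; have e1 := epos hd he.
have [A hA] := ub g; have [B hB] := lb gnz.
set N := (`|A| + `|B|)%N; exists (d * N)%N.
have tN : t (e * N%:Z) = p ^+ (d * N) by rewrite tX exprM he.
split.
  have -> : pi ^+ (d * N) = t (- (e * N%:Z)).
    rewrite -[RHS]mulr1 -(pow_inv (d * N)).1 mulrA -tN (t_inv _).2 mul1r //.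
  apply: (le_trans' _ hB); apply: le_t; rewrite /N; nia.
apply: (le_trans' hA); rewrite -tN; apply: le_t; rewrite /N; nia.
Qed.

Lemma pow_nat N g : le 1 g -> le g (p ^+ N) -> exists j : nat, g = p ^+ j.
Proof.
elim: N g => [|N IH] g h1 h2.
  by exists 0%N; rewrite expr0; apply: le_anti => //; rewrite -(expr0 p).
case: (total g (p ^+ N)) => e; last first.
  by apply: IH => //.
set h := pi ^+ N * g.
have eg : g = p ^+ N * h by rewrite /h mulrA (pow_inv N).1 mul1r.
have hh1 : le 1 h.
  rewrite -(pow_inv N).2 /h; apply: leMl; by rewrite /le addrC e.
have hhp : le h p.
  have := leMl (pi ^+ N) h2; by rewrite exprSr mulrA (pow_inv N).2 mul1r.
case: (classic (h = 1)) => [h1e|hne].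
  by exists N; rewrite eg h1e mulr1.
have hp' : le p h by apply: hpmin; split => // e1; apply: hne.
exists N.+1; rewrite eg exprSr; congr (_ * _); exact: le_anti.
Qed.

Definition zp (j : int) : D :=
  match j with Posz n => p ^+ n | Negz n => pi ^+ n.+1 end.

Lemma zp_sub (a b : nat) : p ^+ a * pi ^+ b = zp (a%:Z - b%:Z).
Proof.
elim: b a => [|b IH] [|a].
- by rewrite !expr0 mulr1.
- by rewrite expr0 mulr1 subr0.
- by rewrite expr0 mul1r sub0r -NegzE.
- rewrite exprSr exprS mulrA -(mulrA _ p) hpi1 mulr1 IH; congr zp.
  rewrite -[a.+1]addn1 -[b.+1]addn1 !PoszD; lia.
Qed.

Lemma zp_split (j : int) : exists a b : nat, j = a%:Z - b%:Z.
Proof. case: j => n; [by exists n, 0%N; rewrite subr0 | by exists 0%N, n.+1; rewrite sub0r]. Qed.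

Lemma zpD a b : zp (a + b) = zp a * zp b.
Proof.
have [a1 [a2 ->]] := zp_split a; have [b1 [b2 ->]] := zp_split b.
rewrite -!zp_sub mulrA -(mulrA (p ^+ a1)) -comm_pow mulrA -exprD -mulrA -exprD zp_sub.
congr zp; rewrite !PoszD; lia.
Qed.

Lemma zp0 : zp 0 = 1. Proof. by rewrite /= expr0. Qed.

Lemma zp_inv j : zp j * zp (- j) = 1.
Proof. by rewrite -zpD subrr zp0. Qed.

Lemma zp_neq0 j : zp j <> 0.
Proof. move=> h; apply: one_neq0; by rewrite -(zp_inv j) h mul0r. Qed.

Lemma zp_eq1 j : zp j = 1 -> j = 0.
Proof.
case: j => [[|n]|n] //= h.
  by have := (lt1pn n).2; rewrite h.
exfalso; have := (lt1pn n).2; apply.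
by rewrite -(pow_inv n.+1).1 h mulr1.
Qed.

Lemma zp_inj : injective zp.
Proof.
move=> a b e; apply/eqP; rewrite -subr_eq0; apply/eqP; apply: zp_eq1.
by rewrite zpD e zp_inv.
Qed.

Lemma le1zp j : (0 <= j)%R -> le 1 (zp j).
Proof. by case: j => // n _; apply: le1pn. Qed.

Lemma zp_max a b : zp a + zp b = zp (Num.max a b).
Proof.
wlog hab : a b / (a <= b)%R.
  move=> W; case/orP: (le_total a b) => h; first exact: W.
  by rewrite addrC maxC; apply: W.
rewrite (max_idPr hab).
have -> : zp b = zp (b - a) * zp a by rewrite -zpD subrK.
rewrite -{1}(mul1r (zp a)) -mulrDl; congr (_ * _).
by apply: le1zp; rewrite subr_ge0.
Qed.

Lemma zp_all g : g <> 0 -> exists j, g = zp j.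
Proof.
move=> gnz; have [K [h1 h2]] := arch gnz.
have hl : le 1 (p ^+ K * g).
  rewrite -(pow_inv K).1; exact: leMl.
have hu : le (p ^+ K * g) (p ^+ (K + K)) by rewrite exprD; apply: leMl.
have [j ej] := pow_nat hl hu.
exists (j%:Z - K%:Z); by rewrite -zp_sub comm_pow -ej mulrA (pow_inv K).2 mul1r.
Qed.


Lemma zp_cases x : x = 0 \/ exists a, x = zp a.
Proof. case: (classic (x = 0)) => h; [by left | right; exact: zp_all]. Qed.

Definition psi (g : D) : zmax :=
  if g == 0 then None else Some (epsilon (inhabits 0%R) (fun j => g = zp j)).

Lemma psi0 : psi 0 = None. Proof. by rewrite /psi eqxx. Qed.

Lemma psi_zp j : psi (zp j) = Some j.
Proof.
rewrite /psi; case: eqP => [h|_]; first by case: (@zp_neq0 j).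
congr Some; apply: zp_inj; symmetry.
by apply: (epsilon_spec (inhabits 0%R) (fun j' => zp j = zp j')); exists j.
Qed.

Lemma le_zp_neg j : (j <= 0)%R -> le (zp j) 1.
Proof.
move=> hj; rewrite -(zp_inv j) -{1}(mulr1 (zp j)); apply: leMl.
by apply: le1zp; rewrite oppr_ge0.
Qed.

Lemma zpX j (a : nat) : zp (j * a%:Z) = zp j ^+ a.
Proof.
elim: a => [|a IH]; first by rewrite mulr0 zp0 expr0.
by rewrite exprSr -IH -zpD -[a.+1]addn1 PoszD mulrDr mulr1.
Qed.

Lemma final : exists n : nat, (0 < n)%N /\
    exists psi : D -> zmax,
      [/\ bijective psi, semiring_hom_to_zmax psi,
          forall k : zmax, psi (phi k) = zmax_pow_embed n k
        & forall x y : D, x * y = y * x].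
Proof.
have [n0 en0] := zp_all (@t_neq0 1).
have n0pos : (0 < n0)%R.
  rewrite ltNge; apply/negP => h; apply: t1_neq1; apply: le_anti; first exact: le1t.
  by rewrite en0; apply: le_zp_neg.
case: n0 en0 n0pos => // n en0 npos.
have tk k : t k = zp (k * n%:Z).
  have [a [b ->]] := zp_split k.
  have ta : t a%:Z = zp (a%:Z * n%:Z) by rewrite -{1}[a%:Z]mul1r tX en0 -zpX mulrC.
  have tbp : t b%:Z = zp (b%:Z * n%:Z) by rewrite -{1}[b%:Z]mul1r tX en0 -zpX mulrC.
  have tb : t (- b%:Z) = zp (- (b%:Z * n%:Z)).
    by rewrite -[LHS]mulr1 -(zp_inv (b%:Z * n%:Z)) mulrA -tbp (t_inv _).2 mul1r.
  by rewrite -tM ta tb -zpD mulrBl.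
exists n; split => //; exists psi; split.
- exists (fun o => if o is Some j then zp j else 0).
    move=> x; case: (zp_cases x) => [->|[a ->]]; by rewrite ?psi0 ?psi_zp.
  by case => [j|]; rewrite ?psi0 ?psi_zp.
- split.
  + exact: psi0.
  + by rewrite -zp0 psi_zp.
  + move=> x y; case: (zp_cases x) => [->|[a ->]]; first by rewrite add0r psi0.
    case: (zp_cases y) => [->|[b ->]]; first by rewrite addr0 psi0 psi_zp.
    by rewrite zp_max !psi_zp.
  + move=> x y; case: (zp_cases x) => [->|[a ->]]; first by rewrite mul0r psi0.
    case: (zp_cases y) => [->|[b ->]]; first by rewrite mulr0 psi0 psi_zp.
    by rewrite -zpD !psi_zp.
- case => [k|]; last by rewrite phi0 psi0.
  by rewrite tk psi_zp.
- move=> x y; case: (zp_cases x) => [->|[a ->]]; first by rewrite mul0r mulr0.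
  case: (zp_cases y) => [->|[b ->]]; first by rewrite mul0r mulr0.
  by rewrite -!zpD addrC.
Qed.

End Pi.

End Main.

Theorem mainTheorem2 (D : pzSemiRingType) (phi : zmax -> D) :
  division_semialgebra_zmax phi ->
  finite_semialgebra phi ->
  exists n : nat, (0 < n)%N /\
    exists psi : D -> zmax,
      [/\ bijective psi, semiring_hom_to_zmax psi,
          forall k : zmax, psi (phi k) = zmax_pow_embed n k
        & forall x y : D, x * y = y * x].
Proof.
move=> hdiv hfin; have [p [hp hpmin]] := pi_ex hdiv hfin.
have pnz : p <> 0.
  move=> p0; apply: (one_neq0 hdiv); apply: le_0; rewrite -p0; exact: hp.1.1.
have [pi [h1 h2]] := Hinv hdiv pnz.
exact: (final hdiv hfin hp hpmin h1 h2).
Qed.
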